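(* Let $h$ be a history. If for all $d_1,d_2\in\mathrm{dom}(h)$ we have $h|_{\{d_1,d_2\}}\sqsubseteq M(R_{EnqDeq})$, then $h\sqsubseteq M(R_{EnqDeq})$.
   Context: Data values are natural numbers. Operations (resp. method events) are pairs of a method in $\{Enq, Deq, DeqEmpty\}$ and a data value. A history $h$ is a finite set of operations with a strict partial order $<_{hb}$ (happens-before) that is an interval order (if $o_1<_{hb}o_2$ and $o_3<_{hb}o_4$ then $o_1<_{hb}o_4$ or $o_3<_{hb}o_2$). $\mathrm{dom}(h)$ is the set of data values occurring in $h$; for $D\subseteq\mathbb N$, $h|_D$ is the restriction of $h$ to operations with data value in $D$ (with the induced order). A sequential execution is a finite sequence of method events. $h\sqsubseteq u$ means there is a bijection between operations of $h$ and positions of $u$ preserving method and data value such that $o_1<_{hb}o_2$ implies the image of $o_1$ precedes that of $o_2$; $h\sqsubseteq S$ means $h\sqsubseteq u$ for some $u\in S$. $M(R_{EnqDeq})$ is the set of sequential executions of the form $Enq(x)\cdot u\cdot Deq(x)\cdot v$ for some data value $x$, where $u$ consists only of $Enq$ events and $x$ occurs neither in $u$ nor in $v$. *)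

(* Defs.v *)
From HB Require Import structures.
From mathcomp Require Import all_boot.
Set Implicit Arguments. Unset Strict Implicit. Unset Printing Implicit Defensive.

Inductive method := Enq | Deq | DeqEmpty.

Definition method_eqb (a b : method) : bool :=
  match a, b with
  | Enq, Enq | Deq, Deq | DeqEmpty, DeqEmpty => true
  | _, _ => false
  end.

Lemma method_eqP : Equality.axiom method_eqb.
Proof. by case; case; constructor. Qed.

HB.instance Definition _ := hasDecEq.Build method method_eqP.

Definition op := (method * nat)%type.

(* A history: a finite set of operations (duplicate-free list) with a
   happens-before relation. *)
Record history := History { ops : seq op; hb : rel op }.

(* Well-formedness: ops is a set; hb is a strict partial order on ops that is
   an interval order. *)
Definition is_history (h : history) : Prop :=
  [/\ uniq (ops h),
      {in ops h, forall o, ~~ hb h o o},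
      {in ops h & &, forall o1 o2 o3, hb h o1 o2 -> hb h o2 o3 -> hb h o1 o3} &
      {in ops h & &, forall o1 o2 o3, forall o4, o4 \in ops h ->
          hb h o1 o2 -> hb h o3 o4 -> hb h o1 o4 || hb h o3 o2}].

Definition dom (h : history) : seq nat := map snd (ops h).

Definition restrict (h : history) (D : pred nat) : history :=
  History [seq o <- ops h | D o.2] (hb h).

Definition execution := seq op.

(* h ⊑ u : a bijection between operations of h and positions of u that
   preserves method and data value and respects happens-before. *)
Definition sqle_exec (h : history) (u : execution) : Prop :=
  exists f : op -> nat,
    [/\ size u = size (ops h),
        {in ops h &, injective f},
        {in ops h, forall o, f o < size u /\ nth o u (f o) = o} &
        {in ops h &, forall o1 o2, hb h o1 o2 -> f o1 < f o2}].

Definition sqle_set (h : history) (S : execution -> Prop) : Prop :=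
  exists u, S u /\ sqle_exec h u.

Definition M_EnqDeq (w : execution) : Prop :=
  exists (x : nat) (u v : execution),
    [/\ w = (Enq, x) :: u ++ (Deq, x) :: v,
        all (fun e : op => e.1 == Enq) u,
        x \notin map snd u &
        x \notin map snd v].

(* Main.v *)
Require Import Defs.
From mathcomp Require Import all_boot.
Set Implicit Arguments. Unset Strict Implicit. Unset Printing Implicit Defensive.

Lemma count_le_in (T : eqType) (s : seq T) (P Q : pred T) :
  {in s, forall q, P q -> Q q} -> count P s <= count Q s.
Proof.
elim: s => //= a s IH sub.
rewrite leq_add //; last by apply: IH => q qs; apply: sub; rewrite inE qs orbT.
by case: (boolP (P a)) => // Pa; rewrite (sub a (mem_head _ _) Pa).
Qed.

Lemma count_lt (T : eqType) (s : seq T) (P Q : pred T) p :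
  {in s, forall q, P q -> Q q} -> p \in s -> Q p -> ~~ P p -> count P s < count Q s.
Proof.
elim: s => // a s IH sub; rewrite inE => /orP [/eqP-> | ps] Qp nPp /=.
- rewrite Qp (negbTE nPp) add0n add1n ltnS; apply: count_le_in => q qs.
  by apply: sub; rewrite inE qs orbT.
- have sub' : {in s, forall q, P q -> Q q} by move=> q qs; apply: sub; rewrite inE qs orbT.
  have := IH sub' ps Qp nPp.
  case: (boolP (P a)) => Pa; last by move=> H; apply: (leq_trans H); rewrite leq_addl.
  by rewrite (sub a (mem_head _ _) Pa) /= !add1n ltnS.
Qed.

Lemma exists_max (T : eqType) (s : seq T) (g : T -> nat) a0 :
  a0 \in s -> exists2 a, a \in s & forall b, b \in s -> g b <= g a.
Proof.
elim: s a0 => // a s IH a0 _; case: s IH => [|b s] IH.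
  by exists a => [|c]; rewrite ?mem_head // inE => /eqP->.
have [m ms mmax] := IH b (mem_head _ _).
case: (leqP (g a) (g m)) => H.
  exists m; first by rewrite inE ms orbT.
  by move=> c; rewrite inE => /orP [/eqP-> // | /mmax].
exists a; first by rewrite mem_head.
move=> c; rewrite inE => /orP [/eqP-> // | /mmax Hc]; exact: (leq_trans Hc (ltnW H)).
Qed.

Lemma exists_min (T : eqType) (s : seq T) (g : T -> nat) a0 :
  a0 \in s -> exists2 a, a \in s & forall b, b \in s -> g a <= g b.
Proof.
elim: s a0 => // a s IH a0 _; case: s IH => [|b s] IH.
  by exists a => [|c]; rewrite ?mem_head // inE => /eqP->.
have [m ms mmax] := IH b (mem_head _ _).
case: (leqP (g m) (g a)) => H.
  exists m; first by rewrite inE ms orbT.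
  by move=> c; rewrite inE => /orP [/eqP-> // | /mmax].
exists a; first by rewrite mem_head.
move=> c; rewrite inE => /orP [/eqP-> // | /mmax Hc]; exact: (leq_trans (ltnW H) Hc).
Qed.

Definition topo (T : eqType) (r : rel T) (s : seq T) :=
  sort (fun a b => count (fun c => r c a) s <= count (fun c => r c b) s) s.

Lemma topo_ok (T : eqType) (r : rel T) (s : seq T) :
  {in s, forall a, ~~ r a a} ->
  {in s & &, forall a b c, r a b -> r b c -> r a c} ->
  perm_eq (topo r s) s /\
  {in s &, forall a b, r a b -> index a (topo r s) < index b (topo r s)}.
Proof.
move=> irr tr; split; first by rewrite perm_sort.
move=> a b ais bis rab.
set key := fun x => count (fun c => r c x) s.
have klt : key a < key b.
  apply: (count_lt (p := a)) => //; last exact: irr.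
  by move=> q qs rqa; apply: (tr q a b).
set t := topo r s.
have memt : forall x, (x \in t) = (x \in s) by move=> x; rewrite /t /topo mem_sort.
rewrite ltnNge; apply/negP => Hle.
have st : sorted (fun x y => key x <= key y) t.
  by apply: sort_sorted => x y; apply: leq_total.
have := @sorted_leq_nth _ (fun x y => key x <= key y) (fun x y z => @leq_trans (key x) (key y) (key z)) (fun x => leqnn _) a t st (index b t) (index a t).
rewrite !inE !index_mem !memt bis ais => /(_ isT isT Hle).
rewrite !nth_index ?memt //.
by rewrite leqNgt klt.
Qed.

Lemma sqle_iff h u : uniq (ops h) ->
  sqle_exec h u <-> (perm_eq u (ops h) /\
     {in ops h &, forall o1 o2, hb h o1 o2 -> index o1 u < index o2 u}).
Proof.
move=> U; split.
- move=> [f [sz inj fo ord]].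
  have sub : {subset ops h <= u}.
    by move=> o oh; have [lt <-] := fo o oh; apply: mem_nth.
  have [_ equ] := uniq_min_size U sub (eq_leq sz).
  have Uu : uniq u by rewrite (uniq_size_uniq U equ) sz.
  have fi : forall o, o \in ops h -> f o = index o u.
    move=> o oh; have [lt E] := fo o oh.
    by rewrite -{2}E index_uniq.
  split; first by apply: uniq_perm => // o; rewrite equ.
  by move=> o1 o2 h1 h2 hb12; rewrite -!fi //; apply: ord.
- move=> [P ord]; exists (fun o => index o u); split.
  + by rewrite (perm_size P).
  + move=> o1 o2 h1 h2; apply: (@index_inj _ o1 u); by rewrite (perm_mem P).
  + by move=> o oh; rewrite index_mem nth_index (perm_mem P).
  + exact: ord.
Qed.

Lemma single h d : is_history h -> d \in dom h ->
  sqle_set (restrict h (fun e => (e == d) || (e == d))) M_EnqDeq ->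
  [/\ forall o, o \in ops h -> o.2 = d -> (o == (Enq, d)) || (o == (Deq, d)),
      (Enq, d) \in ops h, (Deq, d) \in ops h & ~~ hb h (Deq, d) (Enq, d)].
Proof.
move=> [U _ _ _] dd [w [[x [u [v [Ew Au xu xv]]]] S]].
move/sqle_iff: S => /= [] ; first exact: filter_uniq.
move=> P O.
have mem : forall o, (o \in w) = (o \in ops h) && (o.2 == d).
  by move=> o; rewrite (perm_mem P) mem_filter orbb andbC.
have xd : x = d by apply/eqP; have := mem (Enq, x); rewrite Ew mem_head => /esym/andP[].
subst x.
have u0 : u = [::].
  case: u Ew Au xu => // a u' Ew _ xu; exfalso.
  have := mem a; rewrite Ew !inE eqxx !orbT => /esym/andP [_ /eqP ad].
  by move: xu; rewrite /= inE ad eqxx.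
have v0 : v = [::].
  case: v Ew xv => // a v' Ew xv; exfalso.
  have := mem a; rewrite Ew !inE mem_cat !inE eqxx !orbT => /esym/andP [_ /eqP ad].
  by move: xv; rewrite /= inE ad eqxx.
subst u v.
have hE : (Enq, d) \in ops h by have := mem (Enq, d); rewrite Ew mem_head => /esym/andP[].
have hD : (Deq, d) \in ops h by have := mem (Deq, d); rewrite Ew !inE eqxx orbT => /esym/andP[].
split => //.
- move=> o oh od; have := mem o; rewrite oh od eqxx Ew !inE /= => -> //.
- apply/negP => hb1; have := O (Deq, d) (Enq, d); rewrite !mem_filter /= eqxx hD hE => /(_ isT isT hb1); by rewrite Ew /= !eqxx.
Qed.

Lemma pair h z y : is_history h -> z \in dom h -> y \in dom h -> z != y ->
  sqle_set (restrict h (fun e => (e == z) || (e == y))) M_EnqDeq ->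
  (Enq, z) \in ops h -> (Enq, y) \in ops h -> (Deq, z) \in ops h -> (Deq, y) \in ops h ->
  ~~ hb h (Deq, y) (Deq, z) || ~~ hb h (Enq, z) (Enq, y).
Proof.
move=> [U _ _ _] zd yd zy [w [[x [u [v [Ew Au xu xv]]]] S]] hEz hEy hDz hDy.
move/sqle_iff: S => /= [] ; first exact: filter_uniq.
move=> P O.
have mem : forall o, (o \in w) = (o \in ops h) && ((o.2 == z) || (o.2 == y)).
  by move=> o; rewrite (perm_mem P) mem_filter andbC.
have : (x == z) || (x == y) by have := mem (Enq, x); rewrite Ew mem_head => /esym/andP[].
have fl : forall o1 o2, o1 \in ops h -> o2 \in ops h -> o1 \in w -> o2 \in w ->
   index o2 w <= index o1 w -> ~~ hb h o1 o2.
  move=> o1 o2 h1 h2 w1 w2 le; apply/negP => hb12.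
  have := O o1 o2; rewrite -!(perm_mem P) w1 w2 => /(_ isT isT hb12).
  by rewrite ltnNge le.
case/orP => /eqP xe; subst x.
- apply/orP; left; apply: fl => //.
  + by rewrite mem hDy /= eqxx orbT.
  + by rewrite mem hDz /= eqxx.
  have nu : forall m, (Deq, m) \notin u.
    move=> m; apply/negP => mu; have := allP Au _ mu; by [].
  rewrite Ew -cat_cons !index_cat !inE /= (negbTE (nu _)) (negbTE (nu _)) /=.
  by rewrite eqxx leq_add2l.
- apply/orP; right; apply: fl => //.
  + by rewrite mem hEz /= eqxx.
  + by rewrite mem hEy /= eqxx orbT.
  by rewrite Ew /= !eqxx.
Qed.

Lemma idx_in (T : eqType) (a b : seq T) p q :
  p \in a -> q \notin a -> index p (a ++ b) < index q (a ++ b).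
Proof.
move=> pa qa; rewrite !index_cat pa (negbTE qa).
by apply: (leq_trans (_ : _ < size a)); rewrite ?index_mem ?leq_addr.
Qed.

Unset Implicit Arguments.
Theorem mainTheorem4 (h : history) :
  is_history h ->
  dom h != [::] ->
  (forall d1 d2 : nat, d1 \in dom h -> d2 \in dom h ->
     sqle_set (restrict h (fun d => (d == d1) || (d == d2))) M_EnqDeq) ->
  sqle_set h M_EnqDeq.
Proof.
move=> H hne Hyp; have H' := H; case: H' => U Irr Tr IO.
have sing := fun d (dd : d \in dom h) => single H dd (Hyp d d dd dd).
have form : forall o, o \in ops h -> o.2 \in dom h /\ (o = (Enq, o.2) \/ o = (Deq, o.2)).
  move=> o oh; have od : o.2 \in dom h by apply: map_f.
  split => //; have [f _ _ _] := sing _ od.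
  by case/orP: (f o oh erefl) => /eqP ->; [left|right].
have [d0 d0d] : exists d0, d0 \in dom h by case: (dom h) hne => // a s _; exists a; rewrite mem_head.
have [y0 y0d y0max] := exists_max (fun d => count (hb h (Deq, d)) (ops h)) d0d.
have [_ Ey0 Dy0 nDEy0] := sing _ y0d.
have step1 : forall z p, z \in dom h -> p \in ops h -> hb h (Deq, z) p -> hb h (Deq, y0) p.
  move=> z p zd ph hzp; case: (boolP (hb h (Deq, y0) p)) => // nh; exfalso.
  have [_ Ez Dz _] := sing _ zd.
  have := @count_lt _ (ops h) (hb h (Deq, y0)) (hb h (Deq, z)) p.
  have sub : {in ops h, forall q, hb h (Deq, y0) q -> hb h (Deq, z) q}.
    move=> q qh hq; have := IO _ _ _ Dz ph Dy0 _ qh hzp hq; by rewrite (negbTE nh) orbF.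
  move=> /(_ sub ph hzp nh); by rewrite ltnNge y0max.
set A := [seq d <- dom h | ~~ hb h (Deq, y0) (Deq, d)].
have y0A : y0 \in A by rewrite mem_filter y0d Irr.
have [x xA xmin] := exists_min (fun d => count (fun p => hb h p (Enq, d)) (ops h)) y0A.
have Adom : forall y, y \in A -> y \in dom h by move=> y; rewrite mem_filter => /andP[].
have xd := Adom _ xA.
have [xform Ex Dx nDEx] := sing _ xd.
have step2 : forall y p, y \in A -> p \in ops h -> hb h p (Enq, x) -> hb h p (Enq, y).
  move=> y p yA ph hpx; case: (boolP (hb h p (Enq, y))) => // nh; exfalso.
  have [_ Ey _ _] := sing _ (Adom _ yA).
  have := @count_lt _ (ops h) (fun q => hb h q (Enq, y)) (fun q => hb h q (Enq, x)) p.
  have sub : {in ops h, forall q, hb h q (Enq, y) -> hb h q (Enq, x)}.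
    move=> q qh hq; have := IO _ _ _ qh Ey ph _ Ex hq hpx; by rewrite (negbTE nh) orbF.
  move=> /(_ sub ph hpx nh); by rewrite ltnNge xmin.
have step3 : forall o, o \in ops h -> ~~ hb h o (Enq, x).
  move=> o oh; apply/negP => hox.
  have [od oED] := form o oh; move: od oED; set z := o.2 => od [oE|oD].
  - have [_ Ez Dz _] := sing _ od.
    rewrite oE in hox.
    case: (eqVneq z y0) => [zy | zny].
      by have := step2 _ _ y0A Ez hox; rewrite zy (negbTE (Irr _ Ey0)).
    case/orP: (pair H od y0d zny (Hyp z y0 od y0d) Ez Ey0 Dz Dy0) => Hc.
    + have zA : z \in A by rewrite mem_filter od Hc.
      by have := step2 _ _ zA Ez hox; rewrite (negbTE (Irr _ Ez)).
    + by have := step2 _ _ y0A Ez hox; rewrite (negbTE Hc).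
  - rewrite oD in hox.
    have := step2 _ _ y0A Dy0 (step1 _ _ od Ex hox); by rewrite (negbTE nDEy0).
have step4 : forall y, y \in dom h -> ~~ hb h (Deq, y) (Deq, x).
  move=> y yd; apply/negP => hyx; have := step1 _ _ yd Dx hyx.
  by move: xA; rewrite mem_filter => /andP[/negbTE ->].
set S1 := [seq o <- ops h | hb h o (Deq, x) && (o != (Enq, x))].
set S2 := [seq o <- ops h | ~~ hb h o (Deq, x) && (o != (Enq, x)) && (o != (Deq, x))].
have irrS : forall S : seq op, {subset S <= ops h} -> {in S, forall a, ~~ hb h a a}.
  by move=> S sub a aS; exact: (Irr a (sub a aS)).
have trS : forall S : seq op, {subset S <= ops h} -> {in S & &, forall a b c, hb h a b -> hb h b c -> hb h a c}.
  by move=> S sub a b c aS bS cS; exact: (Tr a b c (sub a aS) (sub b bS) (sub c cS)).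
have sub1 : {subset S1 <= ops h} by move=> o; rewrite mem_filter => /andP[].
have sub2 : {subset S2 <= ops h} by move=> o; rewrite mem_filter => /andP[].
have [P1 O1] := topo_ok (irrS S1 sub1) (trS S1 sub1).
have [P2 O2] := topo_ok (irrS S2 sub2) (trS S2 sub2).
set t1 := topo (hb h) S1; set t2 := topo (hb h) S2.
have m1 : forall o, (o \in t1) = (o \in ops h) && (hb h o (Deq, x) && (o != (Enq, x))).
  by move=> o; rewrite (perm_mem P1) mem_filter andbC.
have m2 : forall o, (o \in t2) = (o \in ops h) && (~~ hb h o (Deq, x) && (o != (Enq, x)) && (o != (Deq, x))).
  by move=> o; rewrite (perm_mem P2) mem_filter andbC.
exists ((Enq, x) :: t1 ++ (Deq, x) :: t2); split.
- exists x, t1, t2; split => //.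
  + apply/allP => o; rewrite m1 => /andP [oh /andP [hox onE]].
    have [od [oE|oD]] := form o oh; first by rewrite oE.
    by rewrite oD (negbTE (step4 _ od)) in hox.
  + apply/mapP => [[o ot1 xo]]; move: ot1; rewrite m1 => /andP [oh /andP [hox onE]].
    case/orP: (xform o oh (esym xo)) => /eqP oe.
      by rewrite oe eqxx in onE.
    by rewrite oe (negbTE (Irr _ Dx)) in hox.
  + apply/mapP => [[o ot2 xo]]; move: ot2; rewrite m2 => /andP [oh /andP [/andP [_ onE] onD]].
    case/orP: (xform o oh (esym xo)) => /eqP oe.
      by rewrite oe eqxx in onE.
    by rewrite oe eqxx in onD.
- apply/sqle_iff => //; split.
  + have Ut1 : uniq t1 by rewrite (perm_uniq P1) filter_uniq.
    have Ut2 : uniq t2 by rewrite (perm_uniq P2) filter_uniq.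
    have d1 : (Deq, x) \notin t1 by rewrite m1 (negbTE (Irr _ Dx)) andbF.
    have d2 : (Deq, x) \notin t2 by rewrite m2 eqxx !andbF.
    have e1 : (Enq, x) \notin t1 by rewrite m1 eqxx !andbF.
    have e2 : (Enq, x) \notin t2 by rewrite m2 eqxx !andbF.
    have dis : forall o, o \in t2 -> o \notin t1.
      by move=> o; rewrite m1 m2 => /andP [_ /andP [/andP [/negbTE -> _] _]]; rewrite andbF.
    apply: uniq_perm => //.
      rewrite cons_uniq mem_cat negb_or e1 inE negb_or e2 andbT /=.
      rewrite cat_uniq Ut1 /= negb_or (negbTE d1) d2 Ut2 /= andbT; apply/hasPn => o ot2; exact: dis.
    move=> o; rewrite inE mem_cat inE m1 m2.
    case: (eqVneq o (Enq, x)) => [->|onE]; first by rewrite Ex.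
    case: (eqVneq o (Deq, x)) => [->|onD]; first by rewrite Dx orbT.
    by rewrite /= !andbT; case: (o \in ops h); case: (hb h o (Deq, x)).
  + move=> o1 o2 h1 h2 hb12.
    case: (eqVneq o2 (Enq, x)) => [e2|n2].
      by have := step3 _ h1; rewrite -e2 hb12.
    case: (eqVneq o1 (Enq, x)) => [e1|n1].
      by rewrite e1 /= eqxx eq_sym (negbTE n2).
    rewrite /= eq_sym (negbTE n1) eq_sym (negbTE n2) ltnS.
    case: (boolP (o1 \in t1)) => i1; case: (boolP (o2 \in t1)) => i2.
    * rewrite !index_cat i1 i2; by apply: O1 => //; rewrite -(perm_mem P1).
    * exact: idx_in.
    * exfalso; move: i1 i2; rewrite !m1 h1 h2 n1 n2 /= !andbT => /negP i1 i2.
      by apply: i1; apply: (Tr _ _ _ h1 h2 Dx).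
    * rewrite !index_cat (negbTE i1) (negbTE i2) ltn_add2l /=.
      move: i1 i2; rewrite !m1 h1 h2 n1 n2 /= !andbT => i1 i2.
      case: (eqVneq o2 (Deq, x)) => [e2|m2'].
        by move: i1; rewrite -e2 hb12.
      case: (eqVneq o1 (Deq, x)) => [e1|m1'].
        by [].
      rewrite ltnS.
      apply: O2 => //; rewrite -(perm_mem P2) m2 ?h1 ?h2 ?i1 ?i2 ?n1 ?n2 ?m1' ?m2' //.
Qed.
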